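(* Let $D$ be a positive definite diagonal $n\times n$ matrix, let $1<p\le\infty$ and let $q$ satisfy $\frac1p+\frac1q=1$. Then $$I(p,D)=\Big(\sum_{i=1}^n D_{ii}^{-q}\Big)^{-1/q}.$$ (For $p=\infty$, i.e. the spectral norm, this reads $I(sp,D)=(\sum_i D_{ii}^{-1})^{-1}$.)
   Context: $P(n)$ denotes positive semidefinite complex $n\times n$ matrices and $\circ$ the Hadamard product. $\|\cdot\|_p$ is the Schatten $p$-norm ($\|\cdot\|_\infty$ the spectral norm), and $I(p,A)=\min\{\|A\circ B\|_p: B\in P(n),\ \|B\|_p=1\}$. *)

(* Defs.v *)
From HB Require Import structures.
From mathcomp Require Import all_boot all_order all_algebra.
From mathcomp Require Import sesquilinear spectral.
From mathcomp Require Import all_classical all_reals.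
From mathcomp Require Import exp.
From mathcomp Require Import complex.

Set Implicit Arguments.
Unset Strict Implicit.
Unset Printing Implicit Defensive.

Import Order.TTheory GRing.Theory Num.Theory.
Local Open Scope ring_scope.
Local Open Scope classical_set_scope.

Section Defs.
Variable R : realType.
Local Notation C := (R[i]).

Definition adjmx m n (A : 'M[C]_(m, n)) : 'M[C]_(n, m) := (map_mx conjc A)^T.

Definition hadamard m n (A B : 'M[C]_(m, n)) : 'M[C]_(m, n) :=
  \matrix_(i, j) (A i j * B i j).

(* positive semidefinite: Hermitian with nonnegative quadratic form
   (0 <= z in C means z is a nonnegative real) *)
Definition psd n (A : 'M[C]_n) : Prop :=
  adjmx A = A /\ forall v : 'rV[C]_n, 0 <= (v *m A *m adjmx v) 0 0.

(* singular values: square roots of the eigenvalues of A^* A,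
   obtained from the library's spectral decomposition of the
   Hermitian matrix A^* A *)
Definition singval n (A : 'M[C]_n) (i : 'I_n) : R :=
  Num.sqrt (complex.Re (spectral_diag (adjmx A *m A) 0 i)).

Definition schatten (p : \bar R) n (A : 'M[C]_n) : R :=
  match p with
  | r%:E => powR (\sum_i powR (singval A i) r) r^-1
  | +oo%E => \big[Num.max/0]_i singval A i
  | -oo%E => 0
  end.

Definition I_set (p : \bar R) n (A : 'M[C]_n) : set R :=
  [set schatten p (hadamard A B) | B in [set B | psd B /\ schatten p B = 1]].

Definition I (p : \bar R) n (A : 'M[C]_n) : R := inf (I_set p A).

End Defs.

(* Main.v *)
Require Import Defs.
From HB Require Import structures.
From mathcomp Require Import all_boot all_order all_algebra.
From mathcomp Require Import sesquilinear spectral.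
From mathcomp Require Import all_classical all_reals.
From mathcomp Require Import exp.
From mathcomp Require Import complex.
From mathcomp Require Import ring lra.
Import Order.TTheory GRing.Theory Num.Theory.
Set Implicit Arguments.
Unset Strict Implicit.
Unset Printing Implicit Defensive.
Local Open Scope ring_scope.
Local Open Scope classical_set_scope.
Section Re.
Variable R : realType.

Lemma bigmax_leR n (F : 'I_n -> R) s : 0 <= s -> (forall i, F i <= s) ->
  \big[Num.max/0]_i F i <= s.
Proof. by move=> s0 H; elim/big_ind: _ => // x y; rewrite ge_max => -> ->. Qed.

Lemma le_bigmaxR n (F : 'I_n -> R) j : F j <= \big[Num.max/0]_i F i.
Proof. by rewrite (bigD1 j) //= le_max lexx. Qed.

Lemma sum_ge_term n (F : 'I_n -> R) j : (forall i, 0 <= F i) -> F j <= \sum_i F i.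
Proof.
move=> H; rewrite (bigD1 j) //= lerDl; apply: sumr_ge0 => i _; exact: H.
Qed.

Lemma powRK (s r : R) : 0 <= s -> 0 < r -> powR (powR s r) r^-1 = s.
Proof. by move=> s0 r0; rewrite -powRrM mulfV ?gt_eqF // powRr1. Qed.

Lemma pnorm_le_sum n (x : 'I_n -> R) (r : R) : 1 <= r -> (forall j, 0 <= x j) ->
  powR (\sum_j powR (x j) r) r^-1 <= \sum_j x j.
Proof.
move=> r1 x0; have r0 : 0 < r by apply: lt_le_trans r1.
set T := \sum_j x j.
have T0 : 0 <= T by apply: sumr_ge0.
have [Tz|Tp] := eqVneq T 0.
  have xz j : x j = 0.
    by apply: (psumr_eq0P _ Tz) => // i _; apply: x0.
  rewrite Tz big1 ?powR0 //; last by move=> j _; rewrite xz powR0 // gt_eqF.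
  by rewrite gt_eqF // invr_gt0.
have Tg : 0 < T by rewrite lt_neqAle eq_sym Tp.
rewrite -[X in _ <= X](powRK T0 r0); apply: ge0_ler_powR; rewrite ?nnegrE ?invr_ge0 ?(ltW r0) //.
- by apply: sumr_ge0 => j _; apply: powR_ge0.
- by apply: powR_ge0.
have -> : powR T r = \sum_j x j * powR T r * T^-1.
  by rewrite -!big_distrl /= -/T mulrC mulrA mulVf ?gt_eqF // mul1r.
apply: ler_sum => j _.
have [xz|xp] := eqVneq (x j) 0.
  by rewrite xz powR0 ?gt_eqF // !mul0r.
have xg : 0 < x j by rewrite lt_neqAle eq_sym xp x0.
have xT : x j <= T by apply: sum_ge_term.
have -> : x j * powR T r * T^-1 = powR T r * (x j / T) by rewrite mulrAC mulrC.
have {1}-> : x j = T * (x j / T) by rewrite mulrC divfK // gt_eqF.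
rewrite powRM ?(ltW (divr_gt0 _ _)) //.
rewrite ler_wpM2l ?powR_ge0 //.
apply: ge1r_powR => //; rewrite divr_gt0 //=.
by rewrite ler_pdivrMr // mul1r.
Qed.
End Re.
Section Re2.
Variable R : realType.

Lemma powRVK (s t : R) : 0 <= s -> 0 < t -> powR (powR s t^-1) t = s.
Proof. by move=> s0 t0; rewrite -powRrM mulVf ?gt_eqF // powRr1. Qed.

Lemma powR_cancel (c t : R) : 0 < c -> powR c t * powR c^-1 t = 1.
Proof. by move=> c0; rewrite -powRM ?ltW ?invr_gt0 // mulfV ?gt_eqF // powR1. Qed.

Lemma conj_facts (r q : R) : 1 < r -> r^-1 + q^-1 = 1 ->
  [/\ 0 < r, 0 < q, r * q = r + q & q^-1 = 1 - r^-1].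
Proof.
move=> r1 E; have r0 : 0 < r by apply: lt_trans r1.
have ri : r^-1 < 1 by rewrite invf_lt1.
have qi : q^-1 = 1 - r^-1 by lra.
have q0 : 0 < q by rewrite -invr_gt0 qi; lra.
split => //.
have := congr1 (fun x => x * (r * q)) E => /=.
rewrite mul1r mulrDl mulrA mulVf ?gt_eqF // mul1r mulrCA mulVf ?gt_eqF // mulr1.
by move=> <-; rewrite addrC.
Qed.

Lemma lower_fin n (d b : 'I_n -> R) (r q : R) :
  (0 < n)%N -> (forall j, 0 < d j) -> (forall j, 0 <= b j) -> 1 <= \sum_j b j ->
  1 < r -> r^-1 + q^-1 = 1 ->
  powR (\sum_j powR (d j) (-q)) (-q^-1) <= powR (\sum_j powR (d j * b j) r) r^-1.
Proof.
move=> n0 d0 b0 b1 r1 E; have [r0 q0 rq qi] := conj_facts r1 E.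
pose j0 := Ordinal n0.
set S := \sum_j powR (d j) (-q).
have S0 : 0 < S.
  apply: lt_le_trans (sum_ge_term j0 _); first exact: powR_gt0.
  by move=> j; apply: powR_ge0.
set G := powR S q^-1.
have G0 : 0 < G by apply: powR_gt0.
set s := \sum_j powR (d j * b j) r.
have s0 : 0 <= s by apply: sumr_ge0 => j _; apply: powR_ge0.
set A := powR s r^-1.
have a0 j : 0 <= d j * b j by apply: mulr_ge0; [apply: ltW|].
have A0 : 0 < A.
  rewrite lt_neqAle powR_ge0 andbT; apply/negP => /eqP /esym /powR_eq0_eq0 sz.
  have az j : d j * b j = 0.
    have : powR (d j * b j) r = 0.
      by apply: (psumr_eq0P _ sz) => // i _; apply: powR_ge0.
    exact: powR_eq0_eq0.
  have : \sum_j b j = 0.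
    apply: big1 => j _; have := az j; move/eqP; rewrite mulf_eq0 => /orP[|/eqP //].
    by rewrite gt_eqF.
  by move=> bz; move: b1; rewrite bz ler10.
have Y j : (d j * b j / A) * ((d j)^-1 / G) <=
    powR (d j * b j / A) r / r + powR ((d j)^-1 / G) q / q.
  apply: (conjugate_powR _ _ r0 q0 E).
    exact: divr_ge0 (a0 j) (ltW A0).
  apply: divr_ge0 (ltW G0); rewrite invr_ge0; exact: ltW (d0 j).
have Ysum : \sum_j (d j * b j / A) * ((d j)^-1 / G) <=
    \sum_j (powR (d j * b j / A) r / r + powR ((d j)^-1 / G) q / q).
  by apply: ler_sum => j _; exact: Y.
have Ai : 0 <= A^-1 by rewrite invr_ge0; exact: ltW A0.
have Gi : 0 <= G^-1 by rewrite invr_ge0; exact: ltW G0.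
have -> : powR S (- q^-1) = G^-1 by rewrite powRN.
have L : \sum_j (d j * b j / A) * ((d j)^-1 / G) = (\sum_j b j) / (A * G).
  rewrite big_distrl /=; apply: eq_bigr => j _.
  have dz : d j != 0 by exact: negbT (gt_eqF (d0 j)).
  have Az : A != 0 by exact: negbT (gt_eqF A0).
  have Gz : G != 0 by exact: negbT (gt_eqF G0).
  by rewrite mulrACA [d j * b j * _]mulrAC (mulfV dz) mul1r invfM.
have R1 : \sum_j powR (d j * b j / A) r = 1.
  under eq_bigr => j _ do rewrite (powRM _ (a0 j) Ai).
  rewrite -big_distrl /= -/s -[X in X * _](powRVK s0 r0) -/A.
  exact: powR_cancel.
have R2 : \sum_j powR ((d j)^-1 / G) q = 1.
  have dI j : 0 <= (d j)^-1 by rewrite invr_ge0; exact: ltW (d0 j).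
  under eq_bigr => j _ do rewrite (powRM _ (dI j) Gi) -(powR_inv1 (ltW (d0 j))) -powRrM mulN1r.
  rewrite -big_distrl /= -/S.
  rewrite -[X in X * _](powRVK (ltW S0) q0) -/G; exact: powR_cancel.
have H1 : \sum_j (d j * b j / A) * ((d j)^-1 / G) <= 1.
  have S1 : \sum_j powR (d j * b j / A) r / r = r^-1.
    by rewrite -big_distrl /= R1 mul1r.
  have S2 : \sum_j powR ((d j)^-1 / G) q / q = q^-1.
    by rewrite -big_distrl /= R2 mul1r.
  apply: (le_trans Ysum); rewrite big_split /= S1 S2 E.
  exact: lexx.
have AG : 0 < A * G by exact: mulr_gt0 A0 G0.
move: H1; rewrite L (ler_pdivrMr _ _ AG) mul1r => H.
rewrite -(ler_pM2r G0) (mulVf (negbT (gt_eqF G0))); exact: (le_trans b1 H).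
Qed.
End Re2.
Section Re3.
Variable R : realType.

Lemma upper_fin n (d : 'I_n -> R) (r q : R) :
  (0 < n)%N -> (forall j, 0 < d j) -> 1 < r -> r^-1 + q^-1 = 1 ->
  let S := \sum_j powR (d j) (-q) in
  let b := fun j => powR (d j) (-q) * S^-1 in
  (forall j, 0 <= b j) /\ \sum_j b j = 1 /\
  powR (\sum_j powR (d j * b j) r) r^-1 = powR S (-q^-1).
Proof.
move=> n0 d0 r1 E S b; have [r0 q0 rq qi] := conj_facts r1 E.
pose j0 := Ordinal n0.
have S0 : 0 < S.
  apply: lt_le_trans (sum_ge_term j0 _); first exact: powR_gt0 (d0 j0).
  by move=> j; apply: powR_ge0.
have Sz : S != 0 := negbT (gt_eqF S0).
have Si : 0 <= S^-1 by rewrite invr_ge0; exact: ltW S0.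
split; first by move=> j; apply: mulr_ge0 (powR_ge0 _ _) Si.
split; first by rewrite /b -big_distrl /= -/S (mulfV Sz).
have db j : d j * b j = powR (d j) (1 - q) * S^-1.
  rewrite /b mulrA; congr (_ * _).
  rewrite powRD; last by rewrite (negbT (gt_eqF (d0 j))) implybT.
  by rewrite powRr1 // ltW.
under eq_bigr => j _ do rewrite db (powRM _ (powR_ge0 _ _) Si) -powRrM.
have e1 : (1 - q) * r = - q.
  have -> : (1 - q) * r = r - r * q by rewrite mulrBl mul1r mulrC.
  rewrite rq; lra.
under eq_bigr => j _ do rewrite e1.
rewrite -big_distrl /= -/S.
rewrite (powRM _ (ltW S0) (powR_ge0 _ _)) (powRK Si r0).
have e2 : - q^-1 = r^-1 + (-1) by rewrite qi; lra.
rewrite e2 powRD; last by rewrite Sz implybT.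
by rewrite (powR_inv1 (ltW S0)).
Qed.

Lemma lower_inf n (d b : 'I_n -> R) :
  (forall j, 0 < d j) -> (forall j, 0 <= b j) -> 1 <= \sum_j b j ->
  powR (\sum_j powR (d j) (-1)) (-1) <= \big[Num.max/0]_j (d j * b j).
Proof.
move=> d0 b0 b1.
set M := \big[Num.max/0]_j (d j * b j).
have dI j : 0 <= (d j)^-1 by rewrite invr_ge0; exact: ltW (d0 j).
under eq_bigr => j _ do rewrite (powR_inv1 (ltW (d0 j))).
set T := \sum_j (d j)^-1.
have T0 : 0 <= T by apply: sumr_ge0 => j _; exact: dI j.
have H : \sum_j b j <= M * T.
  rewrite /T big_distrr /=; apply: ler_sum => j _.
  have -> : b j = (d j * b j) * (d j)^-1.
    by rewrite mulrAC (mulfV (negbT (gt_eqF (d0 j)))) mul1r.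
  apply: ler_wpM2r; [exact: dI j | exact: le_bigmaxR].
have MT : 1 <= M * T by exact: (le_trans b1 H).
have Tp : 0 < T.
  rewrite lt_neqAle T0 andbT; apply/negP => /eqP Tz.
  by move: MT; rewrite -Tz mulr0 ler10.
rewrite (powR_inv1 T0) -(ler_pM2r Tp) (mulVf (negbT (gt_eqF Tp))); exact: MT.
Qed.

Lemma upper_inf n (d : 'I_n -> R) :
  (0 < n)%N -> (forall j, 0 < d j) ->
  let S := \sum_j powR (d j) (-1) in
  let b := fun j => powR (d j) (-1) * S^-1 in
  (forall j, 0 <= b j) /\ \sum_j b j = 1 /\
  (forall j, d j * b j = powR S (-1)).
Proof.
move=> n0 d0 S b; pose j0 := Ordinal n0.
have S0 : 0 < S.
  apply: lt_le_trans (sum_ge_term j0 _); first exact: powR_gt0 (d0 j0).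
  by move=> j; apply: powR_ge0.
have Sz : S != 0 := negbT (gt_eqF S0).
have Si : 0 <= S^-1 by rewrite invr_ge0; exact: ltW S0.
split; first by move=> j; apply: mulr_ge0 (powR_ge0 _ _) Si.
split; first by rewrite /b -big_distrl /= -/S (mulfV Sz).
move=> j; rewrite /b (powR_inv1 (ltW (d0 j))) (powR_inv1 (ltW S0)) mulrA.
by rewrite (mulfV (negbT (gt_eqF (d0 j)))) mul1r.
Qed.
End Re3.
Section Mx.
Local Open Scope sesquilinear_scope.
Variable R : realType.
Local Notation C := (R[i]).

Lemma adjE n m (A : 'M[C]_(n,m)) : adjmx A = A ^t*.
Proof. by apply/matrixP => i j; rewrite !mxE. Qed.

Lemma adj_mul m n p (A : 'M[C]_(m,n)) (B : 'M[C]_(n,p)) : (A *m B)^t* = B^t* *m A^t*.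
Proof. by rewrite trmx_mul map_mxM. Qed.

Lemma unitary_tr n (W : 'M[C]_n) : W \is unitarymx -> W^t* *m W = 1%:M.
Proof. by rewrite -trmxC_unitary => /unitarymxP; rewrite trmxCK. Qed.

Lemma intertwine_eq n (W : 'M[C]_n) (d e : 'rV[C]_n) i j :
  diag_mx d *m W = W *m diag_mx e -> W i j != 0 -> d 0 i = e 0 j.
Proof.
move=> /matrixP/(_ i j); rewrite mul_diag_mx mul_mx_diag !mxE => H Wij.
by apply: (mulIf Wij); rewrite H mulrC.
Qed.

Lemma row1 n (W : 'M[C]_n) i : W \is unitarymx -> \sum_j W i j * (W i j)^* = 1.
Proof.
move=> /unitarymxP /matrixP /(_ i i); rewrite !mxE eqxx mulr1n => <-.
by apply: eq_bigr => j _; rewrite !mxE.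
Qed.

Lemma col1 n (W : 'M[C]_n) j : W \is unitarymx -> \sum_i W i j * (W i j)^* = 1.
Proof.
move=> /unitary_tr /matrixP /(_ j j); rewrite !mxE eqxx mulr1n => <-.
by apply: eq_bigr => i _; rewrite !mxE mulrC.
Qed.

Lemma intertwine_sum n (W : 'M[C]_n) (d e : 'rV[C]_n) (f : C -> C) :
  W \is unitarymx -> diag_mx d *m W = W *m diag_mx e ->
  \sum_i f (d 0 i) = \sum_j f (e 0 j).
Proof.
move=> Wu H.
transitivity (\sum_i \sum_j W i j * (W i j)^* * f (d 0 i)).
  by apply: eq_bigr => i _; rewrite -big_distrl /= row1 ?mul1r.
transitivity (\sum_i \sum_j W i j * (W i j)^* * f (e 0 j)).
  apply: eq_bigr => i _; apply: eq_bigr => j _.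
  have [->|nz] := eqVneq (W i j) 0; first by rewrite !mul0r.
  by rewrite (intertwine_eq H nz).
by rewrite exchange_big; apply: eq_bigr => j _; rewrite -big_distrl /= col1 ?mul1r.
Qed.

Lemma intertwine_ex1 n (W : 'M[C]_n) (d e : 'rV[C]_n) j :
  W \is unitarymx -> diag_mx d *m W = W *m diag_mx e -> exists i, d 0 i = e 0 j.
Proof.
move=> Wu H; have [/existsP [i nz]|] := boolP [exists i, W i j != 0].
  by exists i; apply: intertwine_eq H nz.
rewrite negb_exists => /forallP all0; have := col1 j Wu.
rewrite big1 => [/eqP|i _]; first by rewrite eq_sym oner_eq0.
by have := all0 i; rewrite negbK => /eqP->; rewrite mul0r.
Qed.

Lemma intertwine_ex2 n (W : 'M[C]_n) (d e : 'rV[C]_n) i :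
  W \is unitarymx -> diag_mx d *m W = W *m diag_mx e -> exists j, d 0 i = e 0 j.
Proof.
move=> Wu H; have [/existsP [j nz]|] := boolP [exists j, W i j != 0].
  by exists j; apply: intertwine_eq H nz.
rewrite negb_exists => /forallP all0; have := row1 i Wu.
rewrite big1 => [/eqP|j _]; first by rewrite eq_sym oner_eq0.
by have := all0 j; rewrite negbK => /eqP->; rewrite mul0r.
Qed.

Lemma normal_dec n (M : 'M[C]_n) : M \is normalmx ->
  M = (spectralmx M)^t* *m diag_mx (spectral_diag M) *m spectralmx M.
Proof.
by move=> /orthomx_spectralP E; rewrite [in LHS]E invmx_unitary // spectral_unitarymx.
Qed.

Lemma dec_intertwine n (M P Q : 'M[C]_n) d e :
  P \is unitarymx -> Q \is unitarymx ->
  M = P^t* *m diag_mx d *m P -> M = Q^t* *m diag_mx e *m Q ->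
  diag_mx d *m (P *m Q^t*) = (P *m Q^t*) *m diag_mx e.
Proof.
move=> Pu Qu E1 E2.
have h1 : P *m M = diag_mx d *m P by rewrite E1 !mulmxA (unitarymxP Pu) mul1mx.
have h2 : M *m Q^t* = Q^t* *m diag_mx e by rewrite E2 -!mulmxA (unitarymxP Qu) mulmx1.
by rewrite mulmxA -h1 -[P *m M *m _]mulmxA h2 mulmxA.
Qed.

Lemma selfadj_normal n (M : 'M[C]_n) : M^t* = M -> M \is normalmx.
Proof. by move=> E; apply/normalmxP; rewrite E. Qed.

Lemma AtA_dec n (A : 'M[C]_n) :
  adjmx A *m A = (spectralmx (adjmx A *m A))^t* *m diag_mx (spectral_diag (adjmx A *m A)) *m spectralmx (adjmx A *m A).
Proof.
apply: normal_dec; apply: selfadj_normal.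
by rewrite adjE adj_mul trmxCK.
Qed.

Lemma singval_sum n (A Q : 'M[C]_n) e (f : R -> C) :
  Q \is unitarymx -> adjmx A *m A = Q^t* *m diag_mx e *m Q ->
  \sum_i f (singval A i) = \sum_j f (Num.sqrt (complex.Re (e 0 j))).
Proof.
move=> Qu E; rewrite /singval.
apply: (@intertwine_sum _ _ _ _ (fun x => f (Num.sqrt (complex.Re x)))).
  exact: mul_unitarymx (spectral_unitarymx (adjmx A *m A)) (eqbRL (trmxC_unitary _) Qu).
exact: (dec_intertwine (spectral_unitarymx _) Qu (AtA_dec A) E).
Qed.

Lemma singval_ex1 n (A Q : 'M[C]_n) e j :
  Q \is unitarymx -> adjmx A *m A = Q^t* *m diag_mx e *m Q ->
  exists i, singval A i = Num.sqrt (complex.Re (e 0 j)).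
Proof.
move=> Qu E.
have [i Hi] := @intertwine_ex1 _ _ _ _ j
  (mul_unitarymx (spectral_unitarymx (adjmx A *m A)) (eqbRL (trmxC_unitary _) Qu))
  (dec_intertwine (spectral_unitarymx _) Qu (AtA_dec A) E).
by exists i; rewrite /singval Hi.
Qed.

Lemma singval_ex2 n (A Q : 'M[C]_n) e i :
  Q \is unitarymx -> adjmx A *m A = Q^t* *m diag_mx e *m Q ->
  exists j, singval A i = Num.sqrt (complex.Re (e 0 j)).
Proof.
move=> Qu E.
have [j Hj] := @intertwine_ex2 _ _ _ _ i
  (mul_unitarymx (spectral_unitarymx (adjmx A *m A)) (eqbRL (trmxC_unitary _) Qu))
  (dec_intertwine (spectral_unitarymx _) Qu (AtA_dec A) E).
by exists j; rewrite /singval Hj.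
Qed.
End Mx.
Section Mx2.
Local Open Scope sesquilinear_scope.
Local Open Scope complex_scope.
Variable R : realType.
Local Notation C := (R[i]).

Lemma conjR (x : R) : (x%:C)^* = x%:C :> C.
Proof. by apply/eqP; rewrite eq_complex /= oppr0 !eqxx. Qed.

Lemma conjR' (x : R) : Num.conj (x%:C) = x%:C :> C.
Proof. exact: conjR. Qed.

Lemma ge0C (c : C) : 0 <= c -> c = (complex.Re c)%:C /\ 0 <= complex.Re c.
Proof.
case: c => a b; rewrite lecE /= => /andP[/eqP b0 a0]; split => //.
by rewrite b0.
Qed.

Lemma unitary1 n : (1%:M : 'M[C]_n) \is unitarymx.
Proof. by apply/unitarymxP; rewrite trmx1 map_mx1 mulmx1. Qed.

Lemma quadE n (Q B : 'M[C]_n) j :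
  (Q *m B *m Q^t*) j j = (row j Q *m B *m adjmx (row j Q)) 0 0.
Proof.
rewrite adjE !mxE; apply: eq_bigr => l _; rewrite !mxE; congr (_ * _).
by apply: eq_bigr => k _; rewrite !mxE.
Qed.

Lemma unit_conj n (Q M : 'M[C]_n) e : Q \is unitarymx ->
  M = Q^t* *m diag_mx e *m Q -> Q *m M *m Q^t* = diag_mx e.
Proof.
move=> Qu ->; rewrite !mulmxA (unitarymxP Qu) mul1mx -mulmxA (unitarymxP Qu).
by rewrite mulmx1.
Qed.

Lemma trace_dec n (Q M : 'M[C]_n) e : Q \is unitarymx ->
  M = Q^t* *m diag_mx e *m Q -> \sum_j M j j = \sum_j e 0 j.
Proof.
move=> Qu E; have := unit_conj Qu E => /(congr1 (@mxtrace _ _)).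
rewrite mxtrace_mulC mulmxA unitary_tr // mul1mx /mxtrace => ->.
by apply: eq_bigr => j _; rewrite mxE eqxx mulr1n.
Qed.

Lemma psd_diag_ge0 n (B : 'M[C]_n) j : psd B -> 0 <= B j j.
Proof.
case=> _ /(_ (row j 1%:M)); rewrite -quadE mul1mx trmx1 map_mx1 mulmx1.
done.
Qed.

Lemma psd_eig_ge0 n (B : 'M[C]_n) j : psd B -> 0 <= spectral_diag B 0 j.
Proof.
move=> [Ba Bq].
have Bn : B \is normalmx by apply: selfadj_normal; rewrite -adjE.
have := unit_conj (spectral_unitarymx B) (normal_dec Bn).
move=> /matrixP /(_ j j); rewrite quadE [diag_mx _ j j]mxE eqxx mulr1n => <-.
exact: Bq.
Qed.

Lemma psd_AtA n (B : 'M[C]_n) : psd B ->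
  adjmx B *m B = (spectralmx B)^t* *m diag_mx (\row_j (spectral_diag B 0 j ^+ 2))
     *m spectralmx B.
Proof.
move=> [Ba Bq]; rewrite Ba.
have Bn : B \is normalmx by apply: selfadj_normal; rewrite -adjE.
have E := normal_dec Bn.
set Q := spectralmx B in E *; set e := spectral_diag B in E *.
have Qu : Q \is unitarymx by apply: spectral_unitarymx.
transitivity ((Q^t* *m diag_mx e *m Q) *m (Q^t* *m diag_mx e *m Q)); first by rewrite -E.
rewrite !mulmxA -[Q^t* *m diag_mx e *m Q *m Q^t*]mulmxA (unitarymxP Qu) mulmx1.
rewrite -[Q^t* *m _ *m diag_mx e]mulmxA; congr (_ *m _ *m _).
apply/matrixP => i k; rewrite mul_diag_mx !mxE; case: eqP => [->|_].
  by rewrite !mulr1n expr2.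
by rewrite !mulr0n mulr0.
Qed.

Lemma diag_AtA n (c : 'I_n -> R) :
  let A := diag_mx (\row_j (c j)%:C) in
  adjmx A *m A = (1%:M)^t* *m diag_mx (\row_j ((c j)^+2)%:C) *m 1%:M.
Proof.
move=> A; rewrite trmx1 map_mx1 mul1mx mulmx1.
apply/matrixP => i k; rewrite /A adjE tr_diag_mx mul_mx_diag !mxE.
case: eqP => [->|_] /=; last by rewrite !mulr0n rmorph0 mul0r.
by rewrite !mulr1n conjR' rmorphXn expr2.
Qed.

Lemma hadamard_diag n (D B : 'M[C]_n) : is_diag_mx D ->
  hadamard D B = diag_mx (\row_j (D j j * B j j)).
Proof.
move=> /is_diag_mxP Dd; apply/matrixP => i k; rewrite !mxE.
case: (eqVneq i k) => [->|ne]; first by rewrite mulr1n.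
by rewrite Dd ?mul0r ?mulr0n.
Qed.
End Mx2.
Section Mx3.
Local Open Scope sesquilinear_scope.
Local Open Scope complex_scope.
Variable R : realType.
Local Notation C := (R[i]).

Lemma ReR (x : R) : complex.Re (x%:C) = x. Proof. by []. Qed.

Lemma singval_sumR n (A Q : 'M[C]_n) e (f : R -> R) :
  Q \is unitarymx -> adjmx A *m A = Q^t* *m diag_mx e *m Q ->
  \sum_i f (singval A i) = \sum_j f (Num.sqrt (complex.Re (e 0 j))).
Proof.
move=> Qu E; apply: (@complexI R); rewrite !rmorph_sum.
exact: (singval_sum (fun x => (f x)%:C) Qu E).
Qed.

Lemma diag_singval_sum n (c : 'I_n -> R) (f : R -> R) : (forall j, 0 <= c j) ->
  \sum_i f (singval (diag_mx (\row_j (c j)%:C)) i) = \sum_j f (c j).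
Proof.
move=> c0; rewrite (singval_sumR f (@unitary1 R n) (diag_AtA c)).
by apply: eq_bigr => j _; rewrite mxE ReR sqrtr_sqr ger0_norm.
Qed.

Lemma diag_singval_ex1 n (c : 'I_n -> R) j : (forall j, 0 <= c j) ->
  exists i, singval (diag_mx (\row_j (c j)%:C)) i = c j.
Proof.
move=> c0; have [i Hi] := singval_ex1 j (@unitary1 R n) (diag_AtA c).
by exists i; rewrite Hi mxE ReR sqrtr_sqr ger0_norm.
Qed.

Lemma diag_singval_ex2 n (c : 'I_n -> R) i : (forall j, 0 <= c j) ->
  exists j, singval (diag_mx (\row_j (c j)%:C)) i = c j.
Proof.
move=> c0; have [j Hj] := singval_ex2 i (@unitary1 R n) (diag_AtA c).
by exists j; rewrite Hj mxE ReR sqrtr_sqr ger0_norm.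
Qed.

Lemma psd_singval_sum n (B : 'M[C]_n) (f : R -> R) : psd B ->
  \sum_i f (singval B i) = \sum_j f (complex.Re (spectral_diag B 0 j)).
Proof.
move=> Bp; rewrite (singval_sumR f (spectral_unitarymx B) (psd_AtA Bp)).
apply: eq_bigr => j _; rewrite mxE.
move: (psd_eig_ge0 j Bp) => /ge0C [E e0].
by rewrite [in LHS]E -rmorphXn ReR sqrtr_sqr ger0_norm.
Qed.

Lemma psd_trace n (B : 'M[C]_n) : psd B ->
  \sum_j complex.Re (spectral_diag B 0 j) = \sum_j complex.Re (B j j).
Proof.
move=> [Ba Bq].
have Bn : B \is normalmx by apply: selfadj_normal; rewrite -adjE.
have := trace_dec (spectral_unitarymx B) (normal_dec Bn).
by move=> /(congr1 (@complex.Re R)); rewrite !raddf_sum.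
Qed.

Lemma singval_ge0 n (A : 'M[C]_n) i : 0 <= singval A i.
Proof. exact: sqrtr_ge0. Qed.
End Mx3.
Section Mx4.
Local Open Scope sesquilinear_scope.
Local Open Scope complex_scope.
Variable R : realType.
Local Notation C := (R[i]).

Lemma Re1 : complex.Re (1 : C) = 1. Proof. by []. Qed.
Lemma Re0 : complex.Re (0 : C) = 0. Proof. by []. Qed.

Definition prow n (b : 'I_n -> R) : 'rV[C]_n := \row_j (Num.sqrt (b j))%:C.

Lemma prow_entry n (b : 'I_n -> R) j : (forall j, 0 <= b j) ->
  ((prow b)^t* *m prow b) j j = (b j)%:C.
Proof.
move=> b0; rewrite !mxE big_ord1 !mxE conjR' -rmorphM -expr2 sqr_sqrtr //.
Qed.

Lemma prow_unit n (b : 'I_n -> R) : (forall j, 0 <= b j) -> \sum_j b j = 1 ->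
  prow b *m (prow b)^t* = 1%:M.
Proof.
move=> b0 b1; apply/matrixP => i k; rewrite !ord1 !mxE eqxx mulr1n.
transitivity ((\sum_j b j)%:C); last by rewrite b1.
rewrite rmorph_sum; apply: eq_bigr => j _.
by rewrite !mxE conjR' -rmorphM -expr2 sqr_sqrtr.
Qed.

Lemma prow_psd n (b : 'I_n -> R) : psd ((prow b)^t* *m prow b).
Proof.
split; first by rewrite adjE adj_mul trmxCK.
move=> v; rewrite adjE; set x := prow b.
have -> : v *m (x^t* *m x) *m v^t* = (v *m x^t*) *m (v *m x^t*)^t*.
  by rewrite adj_mul trmxCK !mulmxA.
set w := v *m x^t*.
rewrite mxE big_ord1 !mxE.
exact: mulcJ_ge0.
Qed.

Lemma prow_idem n (b : 'I_n -> R) : (forall j, 0 <= b j) -> \sum_j b j = 1 ->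
  ((prow b)^t* *m prow b) *m ((prow b)^t* *m prow b) = (prow b)^t* *m prow b.
Proof.
move=> b0 b1; set x := prow b.
by rewrite mulmxA -[x^t* *m x *m x^t*]mulmxA prow_unit // mulmx1.
Qed.

Lemma proj_facts n (B : 'M[C]_n) : adjmx B = B -> B *m B = B -> \sum_j B j j = 1 ->
  adjmx B *m B = (spectralmx B)^t* *m diag_mx (spectral_diag B) *m spectralmx B /\
  (forall j, spectral_diag B 0 j = 0 \/ spectral_diag B 0 j = 1) /\
  \sum_j spectral_diag B 0 j = 1.
Proof.
move=> Ba BB Bt.
have Bn : B \is normalmx by apply: selfadj_normal; rewrite -adjE.
have E := normal_dec Bn.
have Qu := spectral_unitarymx B.
split; first by rewrite Ba BB.
split; last by rewrite -(trace_dec Qu E).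
move=> j.
have D := unit_conj Qu E.
set e := spectral_diag B in D *; set Q := spectralmx B in D Qu *.
have : diag_mx e *m diag_mx e = diag_mx e.
  rewrite -D !mulmxA -[Q *m B *m Q^t* *m Q]mulmxA unitary_tr // mulmx1.
  by rewrite -[Q *m B *m B]mulmxA BB.
move=> /matrixP /(_ j j); rewrite mul_diag_mx !mxE eqxx mulr1n => H.
have : e 0 j * (e 0 j - 1) = 0 by rewrite mulrBr mulr1 H subrr.
by move/eqP; rewrite mulf_eq0 subr_eq0 => /orP[/eqP|/eqP]; [left|right].
Qed.

Lemma proj_schatten_fin n (B : 'M[C]_n) (r : R) : 0 < r ->
  adjmx B = B -> B *m B = B -> \sum_j B j j = 1 ->
  powR (\sum_i powR (singval B i) r) r^-1 = 1.
Proof.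
move=> r0 Ba BB Bt; have [E [H01 H1]] := proj_facts Ba BB Bt.
rewrite (singval_sumR (fun x => powR x r) (spectral_unitarymx B) E).
have -> : \sum_j powR (Num.sqrt (complex.Re (spectral_diag B 0 j))) r =
    complex.Re (\sum_j spectral_diag B 0 j).
  rewrite raddf_sum; apply: eq_bigr => j _.
  case: (H01 j) => ->.
    by rewrite Re0 sqrtr0 (powR0 (negbT (gt_eqF r0))).
  by rewrite Re1 sqrtr1 powR1.
by rewrite H1 Re1 powR1.
Qed.

Lemma proj_schatten_inf n (B : 'M[C]_n) :
  adjmx B = B -> B *m B = B -> \sum_j B j j = 1 ->
  \big[Num.max/0]_i singval B i = 1.
Proof.
move=> Ba BB Bt; have [E [H01 H1]] := proj_facts Ba BB Bt.
have Qu := spectral_unitarymx B.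
apply/le_anti/andP; split.
  apply: bigmax_leR => [|i]; first exact: ler01.
  have [j ->] := singval_ex2 i Qu E.
  case: (H01 j) => ->; first by rewrite Re0 sqrtr0 ler01.
  by rewrite Re1 sqrtr1 lexx.
have /existsP [j /eqP ej] : [exists j, spectral_diag B 0 j == 1].
  apply: contraT; rewrite negb_exists => /forallP H.
  move: H1; rewrite big1 => [/eqP|j _]; first by rewrite eq_sym oner_eq0.
  by case: (H01 j) => // e1; move: (H j); rewrite e1 eqxx.
have [i Hi] := singval_ex1 j Qu E.
have L := @le_bigmaxR R n (fun k => singval B k) i.
apply: (le_trans _ L); by rewrite Hi ej Re1 sqrtr1 lexx.
Qed.
End Mx4.
Section Main.
Local Open Scope sesquilinear_scope.
Local Open Scope complex_scope.

Lemma schatten_finE (R : realType) n (r : R) (A : 'M[R[i]]_n) :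
  schatten r%:E A = powR (\sum_i powR (singval A i) r) r^-1.
Proof. by []. Qed.

Lemma schatten_infE (R : realType) n (A : 'M[R[i]]_n) :
  schatten +oo%E A = \big[Num.max/0]_i singval A i.
Proof. by []. Qed.

Lemma had_psd (R : realType) n (D B : 'M[R[i]]_n) :
  is_diag_mx D -> (forall j, D j j = (complex.Re (D j j))%:C) -> psd B ->
  hadamard D B = diag_mx (\row_j (complex.Re (D j j) * complex.Re (B j j))%:C).
Proof.
move=> Dd dE Bp; rewrite hadamard_diag //; congr diag_mx; apply/rowP => j.
rewrite !mxE; move: (psd_diag_ge0 j Bp) => /ge0C [E _].
by rewrite [in LHS]E [in LHS]dE -rmorphM.
Qed.

Lemma main_lower (R : realType) (n : nat) (D : 'M[R[i]]_n) (p : \bar R) (q : R) :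
  (0 < n)%N -> is_diag_mx D -> (forall i, 0 < D i i) ->
  (1%:E < p)%E ->
  (forall r : R, p = r%:E -> r^-1 + q^-1 = 1) ->
  (p = +oo%E -> q = 1) ->
  forall B, psd B -> schatten p B = 1 ->
  powR (\sum_i powR (complex.Re (D i i)) (- q)) (- q^-1) <= schatten p (hadamard D B).
Proof.
move=> n0 Dd Dp p1 Hr Hinf B Bp B1.
pose d j := complex.Re (D j j).
have dE j : D j j = (d j)%:C by case: (ge0C (ltW (Dp j))).
have d0 j : 0 < d j.
  by move: (Dp j); rewrite [D j j]dE ltcR.
pose b j := complex.Re (B j j).
have b0 j : 0 <= b j by case: (ge0C (psd_diag_ge0 j Bp)).
have e0 j : 0 <= complex.Re (spectral_diag B 0 j) by case: (ge0C (psd_eig_ge0 j Bp)).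
have c0 j : 0 <= d j * b j by apply: mulr_ge0; [exact: ltW (d0 j) | exact: b0 j].
rewrite (had_psd Dd dE Bp).
case: p p1 Hr Hinf B1 => [r| |] p1 Hr Hinf B1; last by move: p1; rewrite ltNge leNye.
- have r1 : 1 < r by rewrite lte_fin in p1.
  have E := Hr r erefl.
  have sb : 1 <= \sum_j b j.
    rewrite -B1 schatten_finE.
    rewrite (psd_singval_sum (fun x => powR x r) Bp) -(psd_trace Bp).
    by apply: pnorm_le_sum; [exact: ltW r1 | exact: e0].
  rewrite schatten_finE (diag_singval_sum (fun x => powR x r) c0).
  exact: (lower_fin n0 d0 b0 sb r1 E).
- have q1 := Hinf erefl; subst q.
  have sb : 1 <= \sum_j b j.
    rewrite -B1 schatten_infE -(psd_trace Bp).
    rewrite -(psd_singval_sum (fun x => x) Bp).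
    apply: bigmax_leR => [|i]; first by apply: sumr_ge0 => i _; exact: singval_ge0.
    by apply: (sum_ge_term (F := fun i => singval B i)) => k; exact: singval_ge0.
  rewrite invr1 schatten_infE.
  apply: (le_trans (lower_inf d0 b0 sb)).
  apply: bigmax_leR => [|j].
    pose j0 := Ordinal n0.
    exact: (le_trans (singval_ge0 _ j0) (le_bigmaxR _ j0)).
  have [i Hi] := diag_singval_ex1 j c0.
  rewrite -Hi; exact: le_bigmaxR.
Qed.
End Main.
Section Main2.
Local Open Scope sesquilinear_scope.
Local Open Scope complex_scope.

Lemma had_prow (R : realType) n (D : 'M[R[i]]_n) (b : 'I_n -> R) :
  is_diag_mx D -> (forall j, D j j = (complex.Re (D j j))%:C) -> (forall j, 0 <= b j) ->
  hadamard D ((prow b)^t* *m prow b) =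
    diag_mx (\row_j (complex.Re (D j j) * b j)%:C).
Proof.
move=> Dd dE b0; rewrite (had_psd Dd dE (prow_psd b)); congr diag_mx.
by apply/rowP => j; rewrite [LHS]mxE [RHS]mxE (prow_entry _ b0) ReR.
Qed.

Lemma prow_trace (R : realType) n (b : 'I_n -> R) : (forall j, 0 <= b j) ->
  \sum_j b j = 1 -> \sum_j ((prow b)^t* *m prow b) j j = 1.
Proof.
move=> b0 b1; under eq_bigr => j _ do rewrite (prow_entry _ b0).
by rewrite -rmorph_sum b1.
Qed.

Lemma prow_adj (R : realType) n (b : 'I_n -> R) :
  adjmx ((prow b)^t* *m prow b) = (prow b)^t* *m prow b.
Proof. by case: (prow_psd b). Qed.

Lemma main_upper (R : realType) (n : nat) (D : 'M[R[i]]_n) (p : \bar R) (q : R) :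
  (0 < n)%N -> is_diag_mx D -> (forall i, 0 < D i i) ->
  (1%:E < p)%E ->
  (forall r : R, p = r%:E -> r^-1 + q^-1 = 1) ->
  (p = +oo%E -> q = 1) ->
  exists2 B, (psd B /\ schatten p B = 1) &
  schatten p (hadamard D B) = powR (\sum_i powR (complex.Re (D i i)) (- q)) (- q^-1).
Proof.
move=> n0 Dd Dp p1 Hr Hinf.
pose d j := complex.Re (D j j).
have dE j : D j j = (d j)%:C by case: (ge0C (ltW (Dp j))).
have d0 j : 0 < d j.
  by move: (Dp j); rewrite [D j j]dE ltcR.
pose S := \sum_j powR (d j) (-q).
pose b j := powR (d j) (-q) * S^-1.
case: p p1 Hr Hinf => [r| |] p1 Hr Hinf; last by move: p1; rewrite ltNge leNye.
- have r1 : 1 < r by rewrite lte_fin in p1.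
  have E := Hr r erefl.
  have [r0 _ _ _] := conj_facts r1 E.
  have [b0 [b1 bE]] := upper_fin n0 d0 r1 E.
  exists ((prow b)^t* *m prow b).
    split; first exact: prow_psd.
    rewrite schatten_finE; apply: (proj_schatten_fin r0 (prow_adj b)).
      exact: prow_idem b0 b1.
    exact: prow_trace b0 b1.
  rewrite (had_prow Dd dE b0) schatten_finE.
  have c0 j : 0 <= d j * b j by apply: mulr_ge0; [exact: ltW (d0 j) | exact: b0 j].
  rewrite (diag_singval_sum (fun x => powR x r) c0).
  exact: bE.
- have q1 := Hinf erefl; subst q.
  have [b0 [b1 bE]] := upper_inf n0 d0.
  exists ((prow b)^t* *m prow b).
    split; first exact: prow_psd.
    rewrite schatten_infE; apply: (proj_schatten_inf (prow_adj b)).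
      exact: prow_idem b0 b1.
    exact: prow_trace b0 b1.
  rewrite (had_prow Dd dE b0) schatten_infE invr1.
  have c0 j : 0 <= d j * b j by apply: mulr_ge0; [exact: ltW (d0 j) | exact: b0 j].
  pose j0 := Ordinal n0.
  apply/le_anti/andP; split.
    apply: bigmax_leR => [|i]; first exact: powR_ge0.
    have [j ->] := diag_singval_ex2 i c0.
    by rewrite bE lexx.
  have [i Hi] := diag_singval_ex1 j0 c0.
  apply: (le_trans _ (le_bigmaxR _ i)); by rewrite Hi bE lexx.
Qed.
End Main2.

Unset Implicit Arguments.
Theorem corollary5p5 (R : realType) (n : nat) (D : 'M[R[i]]_n)
    (p : \bar R) (q : R) :
  (0 < n)%N ->
  is_diag_mx D -> (forall i, 0 < D i i) ->
  (1%:E < p)%E ->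
  (forall r : R, p = r%:E -> r^-1 + q^-1 = 1) ->
  (p = +oo%E -> q = 1) ->
  let v := powR (\sum_i powR (complex.Re (D i i)) (- q)) (- q^-1) in
  I_set p D v /\ I p D = v.
Proof.
move=> n0 Dd Dp p1 Hr Hinf v.
have Iv : I_set p D v.
  have [B HB HBv] := main_upper n0 Dd Dp p1 Hr Hinf.
  by exists B.
have lb : lbound (I_set p D) v.
  move=> y [B [Bp B1] <-]; exact: (main_lower n0 Dd Dp p1 Hr Hinf Bp B1).
split => //.
apply/le_anti/andP; split.
  have hl : has_lbound (I_set p D) by exists v.
  exact: (ge_inf hl Iv).
exact: (lb_le_inf (ex_intro _ v Iv) lb).
Qed.
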